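(* For every $n\ge 1$, if $\pi$ is uniformly random in $S_n$, then $$\mathrm{Cov}(\mathrm{inv}(\pi),\mathrm{maj}(\pi))=\frac{n(n-1)}{8}.$$ In particular, the correlation coefficient of $\mathrm{inv}$ and $\mathrm{maj}$ on $S_n$ equals $\frac{9(n-1)}{2n^2+3n-5}=\frac{9}{2n+5}$ for $n\ge 2$, which tends to $0$ as $n\to\infty$.
   Context: For a permutation $\pi=\pi_1\cdots\pi_n$ of $\{1,\dots,n\}$: $\mathrm{inv}(\pi)$ is the number of pairs $1\le i<j\le n$ with $\pi_i>\pi_j$, and $\mathrm{maj}(\pi)$ is the sum of all positions $i\in\{1,\dots,n-1\}$ with $\pi_i>\pi_{i+1}$. Both statistics have variance $(2n^3+3n^2-5n)/72$ under the uniform distribution on $S_n$. *)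

(* Defs.v *)
From HB Require Import structures.
From mathcomp Require Import all_boot all_order all_algebra all_fingroup.
Set Implicit Arguments. Unset Strict Implicit. Unset Printing Implicit Defensive.
Import Order.TTheory GRing.Theory Num.Theory.

(* Permutations of {1..n} are modelled as 'S_n = {perm 'I_n}, with 0-indexed
   positions/values; position i (0-indexed) corresponds to position i+1. *)

Definition inv_perm n (s : 'S_n) : nat :=
  #|[set p : 'I_n * 'I_n | (p.1 < p.2)%N && (s p.2 < s p.1)%N]|.

(* maj(pi) = sum of 1-indexed positions i (1 <= i <= n-1) with pi_i > pi_{i+1};
   the 0-indexed position i is a descent iff some j with val j = i+1 satisfies
   s j < s i; its 1-indexed position is i.+1. *)
Definition maj_perm n (s : 'S_n) : nat :=
  \sum_(i : 'I_n | [exists j : 'I_n, (val j == i.+1) && (s j < s i)%N]) i.+1.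

Local Open Scope ring_scope.

Definition Eperm (R : fieldType) n (X : 'S_n -> R) : R :=
  (\sum_(s : 'S_n) X s) / #|{perm 'I_n}|%:R.

Definition Covperm (R : fieldType) n (X Y : 'S_n -> R) : R :=
  Eperm (fun s => X s * Y s) - Eperm X * Eperm Y.

Definition Varperm (R : fieldType) n (X : 'S_n -> R) : R := Covperm X X.

Definition Corrperm (R : rcfType) n (X Y : 'S_n -> R) : R :=
  Covperm X Y / Num.sqrt (Varperm X * Varperm Y).

Definition invR (R : fieldType) n (s : 'S_n) : R := (inv_perm s)%:R.
Definition majR (R : fieldType) n (s : 'S_n) : R := (maj_perm s)%:R.

(* Main.v *)
Require Import Defs.
From Stdlib Require Import Lia.
From HB Require Import structures.
From mathcomp Require Import all_boot all_order all_algebra all_fingroup.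
Import Order.TTheory GRing.Theory Num.Theory.
Set Implicit Arguments. Unset Strict Implicit. Unset Printing Implicit Defensive.

Definition fs n (s : 'S_n) : nat -> nat :=
  fun i => oapp (fun j : 'I_n => val (s j)) 0 (insub i).

Definition invS n (f : nat -> nat) :=
  \sum_(i < n) \sum_(j < n) ((i < j) && (f j < f i)).
Definition majS n (f : nat -> nat) :=
  \sum_(i < n) ((i.+1 < n) && (f i.+1 < f i)) * i.+1.

Lemma fsE n (s : 'S_n) (i : 'I_n) : fs s i = s i.
Proof. by rewrite /fs valK. Qed.

Lemma fsE' n (s : 'S_n) i (h : i < n) : fs s i = s (Ordinal h).
Proof. by rewrite -fsE. Qed.

Lemma inv_permE n (s : 'S_n) : inv_perm s = invS n (fs s).
Proof.
rewrite /inv_perm /invS -sum1_card big_mkcond /= pair_big /=.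
apply: eq_bigr => -[i j] _ /=; rewrite inE /= !fsE.
by case: (_ && _).
Qed.

Lemma maj_permE n (s : 'S_n) : maj_perm s = majS n (fs s).
Proof.
rewrite /maj_perm /majS big_mkcond /=; apply: eq_bigr => i _.
case: ifP => [/existsP [j /andP [/eqP hj hlt]]|hn].
  have hi : i.+1 < n by rewrite -hj ltn_ord.
  rewrite hi /= (fsE' s hi) fsE; have -> : Ordinal hi = j by apply: val_inj.
  by rewrite hlt mul1n.
case hi: (i.+1 < n) => //=.
rewrite (fsE' s hi) fsE; case: ltnP => //= hlt.
by move/negbT: hn; rewrite negb_exists => /forallP /(_ (Ordinal hi)); rewrite eqxx hlt.
Qed.

Definition insf n (f : nat -> nat) v := fun i => if i < n then bump v (f i) else v.

Lemma ltn_bump2 h i j : (bump h i < bump h j) = (i < j).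
Proof. by rewrite !ltnNge leq_bump2. Qed.

Lemma ltn_bumpv v x : (v < bump v x) = (v <= x).
Proof. rewrite /bump; case: (leqP v x) => h /=; first by rewrite add1n ltnS h.
by rewrite add0n; apply/negbTE; rewrite -leqNgt ltnW. Qed.

Lemma invS_ext n (f g : nat -> nat) : (forall i : nat, (i < n)%N -> f i = g i) -> invS n f = invS n g.
Proof.
move=> h; apply: eq_bigr => i _; apply: eq_bigr => j _.
by rewrite !h.
Qed.

Lemma majS_ext n (f g : nat -> nat) : (forall i : nat, (i < n)%N -> f i = g i) -> majS n f = majS n g.
Proof.
move=> h; apply: eq_bigr => i _.
by case hi: (i.+1 < n) => //=; rewrite !h // ltnW.
Qed.

Lemma invS_ins n (f : nat -> nat) v :
  invS n.+1 (insf n f v) = invS n f + \sum_(i < n) (v <= f i).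
Proof.
rewrite /invS big_ord_recr /= [X in _ + X]big1 ?addn0; last first.
  by move=> j _; rewrite ltnNge -ltnS ltn_ord.
rewrite -big_split /=; apply: eq_bigr => i _.
rewrite big_ord_recr /= /insf ltn_ord ltnn ltn_bumpv /=; congr (_ + _).
by apply: eq_bigr => j _; rewrite !ltn_ord ltn_bump2.
Qed.

Lemma majS_ins n (f : nat -> nat) v :
  majS n.+1 (insf n f v) = majS n f + ((0 < n) && (v <= f n.-1)) * n.
Proof.
rewrite /majS big_ord_recr /= ltnn /= addn0.
case: n f => [|n] f; first by rewrite !big_ord0.
rewrite big_ord_recr [in RHS]big_ord_recr /= ltnn /= addn0 /insf.
rewrite ltnn !ltnS leqnn ltn_bumpv /=; congr (_ + _).
apply: eq_bigr => i _.
have h1 : (i < n.+1) := ltn_trans (ltn_ord i) (ltnSn n).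
have h2 : (i.+1 < n.+1) := ltn_ord i.
have h3 : (i.+1 < n.+2) := h1.
by rewrite h1 h2 /= h3 ltn_bump2.
Qed.

Lemma fs_lift n (σ : 'S_n) (v : 'I_n.+1) i : (i < n.+1)%N ->
  fs (lift_perm ord_max v σ) i = insf n (fs σ) v i.
Proof.
move=> hi; rewrite (fsE' _ hi) /insf.
case: (ltnP i n) => hin.
  have -> : Ordinal hi = lift ord_max (Ordinal hin) by apply: val_inj; rewrite /= /bump /= leqNgt hin.
  by rewrite lift_perm_lift (fsE' _ hin).
have -> : Ordinal hi = ord_max by apply: val_inj => /=; apply/eqP; rewrite eqn_leq hin -ltnS hi.
by rewrite lift_perm_id.
Qed.

Lemma sum_leq_k n v : \sum_(k < n) (v <= k) = n - v.
Proof.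
elim: n => [|n IH]; first by rewrite big_ord0.
rewrite big_ord_recr /= IH; case: (leqP v n) => h /=.
  by rewrite addn1 subSn.
have e1 : n - v = 0 by apply/eqP; rewrite subn_eq0 ltnW.
have e2 : n.+1 - v = 0 by apply/eqP; rewrite subn_eq0.
by rewrite e1 e2.
Qed.

Lemma inv_lift n (σ : 'S_n) (v : 'I_n.+1) :
  inv_perm (lift_perm ord_max v σ) = inv_perm σ + (n - v).
Proof.
rewrite !inv_permE (invS_ext (g := insf n (fs σ) v)); last by move=> i; apply: fs_lift.
rewrite invS_ins -sum_leq_k; congr (_ + _).
rewrite [RHS](reindex_inj (@perm_inj _ σ)) /=.
by apply: eq_bigr => i _; rewrite fsE.
Qed.

Lemma maj_lift n (σ : 'S_n) (v : 'I_n.+1) :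
  maj_perm (lift_perm ord_max v σ) = maj_perm σ + ((0 < n) && (v <= fs σ n.-1)) * n.
Proof.
rewrite !maj_permE (majS_ext (g := insf n (fs σ) v)); last by move=> i; apply: fs_lift.
by rewrite majS_ins.
Qed.

Definition mstat n (s : 'S_n.+1) : nat := n - val (s ord_max).

Lemma sum_Sn_lift n (F : 'S_n.+1 -> nat) :
  \sum_(s : 'S_n.+1) F s = \sum_(v : 'I_n.+1) \sum_(σ : 'S_n) F (lift_perm ord_max v σ).
Proof.
rewrite (partition_big (fun s : 'S_n.+1 => s ord_max) predT) //=.
apply: eq_bigr => j0 _.
rewrite (reindex (lift_perm ord_max j0)); last first.
  pose ulsf i (s : 'S_n.+1) k := odflt k (unlift (s i) (s (lift i k))).
  have ulsfK i (s : 'S_n.+1) k: lift (s i) (ulsf i s k) = s (lift i k).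
    rewrite /ulsf; have:= neq_lift i k.
    by rewrite -(can_eq (permK s)) => /unlift_some[] ? ? ->.
  have inj_ulsf: injective (ulsf ord_max _).
    move=> s; apply: can_inj (ulsf (s ord_max) s^-1%g) _ => k'.
    by rewrite {1}/ulsf ulsfK !permK liftK.
  exists (fun s => perm (inj_ulsf s)) => [s _ | s].
    by apply/permP=> k'; rewrite permE /ulsf lift_perm_lift lift_perm_id liftK.
  move/(s _ =P _) => si0; apply/permP=> k.
  case: (unliftP ord_max k) => [k'|] ->; rewrite ?lift_perm_id //.
  by rewrite lift_perm_lift -si0 permE ulsfK.
by apply: eq_bigl => s; rewrite lift_perm_id eqxx.
Qed.

Lemma stats_lift n (σ : 'S_n.+1) (w : 'I_n.+2) :
  let s := lift_perm ord_max (rev_ord w) σ in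
  [/\ inv_perm s = inv_perm σ + w,
      maj_perm s = maj_perm σ + (mstat σ < w) * n.+1 &
      mstat s = w].
Proof.
move=> s; have hw := ltn_ord w.
have hv : val (rev_ord w) = n.+1 - w by [].
split.
- by rewrite /s inv_lift hv subKn // -ltnS.
- rewrite /s maj_lift /= (fsE' _ (ltnSn n)); congr (_ + nat_of_bool _ * _).
  have -> : Ordinal (ltnSn n) = ord_max by apply: val_inj.
  rewrite /mstat; case: (σ ord_max) => x hx /=.
  move: hw hx; rewrite !ltnS => hw hx.
  move/ssrnat.leP: hw; move/ssrnat.leP: hx => hx hw.
  apply/Bool.eq_iff_eq_true; split => /ssrnat.leP h; apply/ssrnat.leP; rewrite -?minusE in h *; lia.
- by rewrite /mstat /s lift_perm_id hv subKn // -ltnS.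
Qed.

Lemma sumS1 K : 2 * \sum_(w < K.+1) w = K * K.+1.
Proof.
elim: K => [|K IH]; first by rewrite big_ord_recr big_ord0.
rewrite big_ord_recr /= mulnDr IH; apply/eqP; rewrite -(eqn_add2l 0) /=.
apply/eqP; rewrite -!plusE -!multE; lia.
Qed.

Lemma sumS2 K : 6 * \sum_(w < K.+1) w * w = K * K.+1 * (2 * K + 1).
Proof.
elim: K => [|K IH]; first by rewrite big_ord_recr big_ord0.
rewrite big_ord_recr /= mulnDr IH; rewrite -!plusE -!multE; lia.
Qed.

Lemma sumSc K m : (m <= K)%N -> \sum_(w < K.+1) (m < w) + m = K.
Proof.
elim: K => [|K IH] hm.
  by rewrite big_ord_recr big_ord0 /=; move: hm; rewrite leqn0 => /eqP ->.
rewrite big_ord_recr /=; case: (leqP m K) => h.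
  have e := IH h; have -> : (m < K.+1) = true := h.
  move: e; rewrite /= -!plusE; lia.
have -> : m = K.+1 by apply/eqP; rewrite eqn_leq hm h.
rewrite ltnn addn0 big1 // => w _; rewrite ltnNge; case: w => w /= hw.
by rewrite ltnW.
Qed.

Lemma sumSwc K m : (m <= K)%N -> 2 * \sum_(w < K.+1) (m < w) * w + m * m.+1 = K * K.+1.
Proof.
elim: K => [|K IH] hm.
  by rewrite big_ord_recr big_ord0 /=; move: hm; rewrite leqn0 => /eqP ->.
rewrite big_ord_recr /=; case: (leqP m K) => h.
  have e := IH h; have -> : (m < K.+1) = true := h.
  move: e; rewrite /= mul1n mulnDr -!plusE -!multE; lia.
have -> : m = K.+1 by apply/eqP; rewrite eqn_leq hm h.
rewrite ltnn mul0n addn0 big1 // => w _; rewrite ltnNge; case: w => w /= hw.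
by rewrite ltnW.
Qed.

Lemma sum_lin K m x0 x1 x2 x3 x4 :
  \sum_(w < K.+1) (x0 + x1 * w + x2 * (w * w) + x3 * (m < w) + x4 * ((m < w) * w))
  = K.+1 * x0 + x1 * \sum_(w < K.+1) w + x2 * \sum_(w < K.+1) w * w
    + x3 * \sum_(w < K.+1) (m < w) + x4 * \sum_(w < K.+1) (m < w) * w.
Proof.
rewrite !big_split /= -!big_distrr /=; congr (_ + _ + _ + _ + _).
by rewrite sum_nat_const card_ord.
Qed.

Lemma sum_decomp n (F : nat -> nat -> nat -> nat) :
  \sum_(s : 'S_n.+2) F (inv_perm s) (maj_perm s) (mstat s) =
  \sum_(σ : 'S_n.+1) \sum_(w < n.+2)
     F (inv_perm σ + w) (maj_perm σ + (mstat σ < w) * n.+1) w.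
Proof.
rewrite sum_Sn_lift exchange_big /=; apply: eq_bigr => σ _.
rewrite (reindex_inj rev_ord_inj) /=; apply: eq_bigr => w _.
by case: (stats_lift σ w) => -> -> ->.
Qed.

Definition SS n (F : nat -> nat -> nat -> nat) :=
  \sum_(s : 'S_n.+1) F (inv_perm s) (maj_perm s) (mstat s).

Lemma mstat_le n (s : 'S_n.+1) : (mstat s <= n)%N.
Proof. exact: leq_subr. Qed.

Lemma SS_rec n F :
  SS n.+1 F = \sum_(σ : 'S_n.+1) \sum_(w < n.+2)
     F (inv_perm σ + w) (maj_perm σ + (mstat σ < w) * n.+1) w.
Proof. exact: sum_decomp. Qed.

Ltac tonat := rewrite -?plusE -?multE.

Lemma inner_basic K m : (m <= K)%N ->
  [/\ 2 * \sum_(w < K.+1) w = K * K.+1,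
      6 * \sum_(w < K.+1) w * w = K * K.+1 * (2 * K + 1),
      \sum_(w < K.+1) (m < w) + m = K &
      2 * \sum_(w < K.+1) (m < w) * w + m * m.+1 = K * K.+1].
Proof. by move=> h; split; [exact: sumS1|exact: sumS2|exact: sumSc|exact: sumSwc]. Qed.

Lemma sum_comb4 (I : finType) c1 c2 c3 c4 (f1 f2 f3 f4 : I -> nat) :
  c1 * \sum_i f1 i + c2 * \sum_i f2 i + c3 * \sum_i f3 i + c4 * \sum_i f4 i
  = \sum_i (c1 * f1 i + c2 * f2 i + c3 * f3 i + c4 * f4 i).
Proof. by rewrite !big_split !big_distrr. Qed.

Lemma sum_comb3 (I : finType) c1 c2 c3 (f1 f2 f3 : I -> nat) :
  c1 * \sum_i f1 i + c2 * \sum_i f2 i + c3 * \sum_i f3 i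
  = \sum_i (c1 * f1 i + c2 * f2 i + c3 * f3 i).
Proof. by rewrite !big_split !big_distrr. Qed.

Lemma sum_comb2 (I : finType) c1 c2 (f1 f2 : I -> nat) :
  c1 * \sum_i f1 i + c2 * \sum_i f2 i = \sum_i (c1 * f1 i + c2 * f2 i).
Proof. by rewrite !big_split !big_distrr. Qed.

Lemma sum_comb1 (I : finType) c1 (f1 : I -> nat) :
  c1 * \sum_i f1 i = \sum_i (c1 * f1 i).
Proof. by rewrite !big_distrr. Qed.

Lemma recC n : let K := n.+1 in
  2 * SS n.+1 (fun a b _ => a * b) + 2 * K * SS n (fun a _ m => a * m)
    + K * SS n (fun _ _ m => m * m) + K * SS n (fun _ _ m => m)
  = 2 * K.+1 * SS n (fun a b _ => a * b) + 2 * K * K * SS n (fun a _ _ => a)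
    + K * K.+1 * SS n (fun _ b _ => b) + K * K * K.+1 * SS n (fun _ _ _ => 1).
Proof.
move=> K; rewrite SS_rec /SS [LHS]sum_comb4 [RHS]sum_comb4; apply: eq_bigr => σ _.
have hm := mstat_le σ; move: hm; move: (inv_perm σ) (maj_perm σ) (mstat σ) => a b m hm.
  rewrite (eq_bigr (fun w : 'I_n.+2 => a * b + b * w + 0 * (w * w) + (a * K) * (m < w)
       + K * ((m < w) * w))); last first.
    by move=> w _; case: (m < w); tonat; simpl; lia.
  rewrite sum_lin.
  have [h1 h2 h3 h4] := inner_basic (leqW hm : (m <= K)%N).
  move: h1 h2 h3 h4.
  set s1 := \sum_(w < K.+1) w; set s2 := \sum_(w < K.+1) w * w.
  set s3 := \sum_(w < K.+1) (m < w); set s4 := \sum_(w < K.+1) (m < w) * w.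
  tonat; nia.
Qed.

Lemma recN n : let K := n.+1 in
  1 * SS n.+1 (fun _ _ _ => 1) = K.+1 * SS n (fun _ _ _ => 1).
Proof.
move=> K; rewrite SS_rec /SS [LHS]sum_comb1 [RHS]sum_comb1; apply: eq_bigr => σ _.
have hm := mstat_le σ; move: hm; move: (inv_perm σ) (maj_perm σ) (mstat σ) => a b m hm.
rewrite (eq_bigr (fun w : 'I_n.+2 => 1 + 0 * w + 0 * (w * w) + 0 * (m < w) + 0 * ((m < w) * w))); last first.
  by move=> w _; case: (m < w); tonat; simpl; lia.
rewrite sum_lin.
have [h1 h2 h3 h4] := inner_basic (leqW hm : (m <= K)%N).
move: h1 h2 h3 h4.
set s1 := \sum_(w < K.+1) w; set s2 := \sum_(w < K.+1) w * w.
set s3 := \sum_(w < K.+1) (m < w); set s4 := \sum_(w < K.+1) (m < w) * w.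
tonat; nia.
Qed.

Lemma recA1 n : let K := n.+1 in
  2 * SS n.+1 (fun a _ _ => a) = 2 * K.+1 * SS n (fun a _ _ => a) + K * K.+1 * SS n (fun _ _ _ => 1).
Proof.
move=> K; rewrite SS_rec /SS [LHS]sum_comb1 [RHS]sum_comb2; apply: eq_bigr => σ _.
have hm := mstat_le σ; move: hm; move: (inv_perm σ) (maj_perm σ) (mstat σ) => a b m hm.
rewrite (eq_bigr (fun w : 'I_n.+2 => a + 1 * w + 0 * (w * w) + 0 * (m < w) + 0 * ((m < w) * w))); last first.
  by move=> w _; case: (m < w); tonat; simpl; lia.
rewrite sum_lin.
have [h1 h2 h3 h4] := inner_basic (leqW hm : (m <= K)%N).
move: h1 h2 h3 h4.
set s1 := \sum_(w < K.+1) w; set s2 := \sum_(w < K.+1) w * w.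
set s3 := \sum_(w < K.+1) (m < w); set s4 := \sum_(w < K.+1) (m < w) * w.
tonat; nia.
Qed.

Lemma recA2 n : let K := n.+1 in
  6 * SS n.+1 (fun a _ _ => a * a) = 6 * K.+1 * SS n (fun a _ _ => a * a) + 6 * K * K.+1 * SS n (fun a _ _ => a) + K * K.+1 * (2 * K + 1) * SS n (fun _ _ _ => 1).
Proof.
move=> K; rewrite SS_rec /SS [LHS]sum_comb1 [RHS]sum_comb3; apply: eq_bigr => σ _.
have hm := mstat_le σ; move: hm; move: (inv_perm σ) (maj_perm σ) (mstat σ) => a b m hm.
rewrite (eq_bigr (fun w : 'I_n.+2 => a * a + (2 * a) * w + 1 * (w * w) + 0 * (m < w) + 0 * ((m < w) * w))); last first.
  by move=> w _; case: (m < w); tonat; simpl; lia.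
rewrite sum_lin.
have [h1 h2 h3 h4] := inner_basic (leqW hm : (m <= K)%N).
move: h1 h2 h3 h4.
set s1 := \sum_(w < K.+1) w; set s2 := \sum_(w < K.+1) w * w.
set s3 := \sum_(w < K.+1) (m < w); set s4 := \sum_(w < K.+1) (m < w) * w.
tonat; nia.
Qed.

Lemma recB1 n : let K := n.+1 in
  1 * SS n.+1 (fun _ b _ => b) + K * SS n (fun _ _ m => m) = K.+1 * SS n (fun _ b _ => b) + K * K * SS n (fun _ _ _ => 1).
Proof.
move=> K; rewrite SS_rec /SS [LHS]sum_comb2 [RHS]sum_comb2; apply: eq_bigr => σ _.
have hm := mstat_le σ; move: hm; move: (inv_perm σ) (maj_perm σ) (mstat σ) => a b m hm.
rewrite (eq_bigr (fun w : 'I_n.+2 => b + 0 * w + 0 * (w * w) + K * (m < w) + 0 * ((m < w) * w))); last first.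
  by move=> w _; case: (m < w); tonat; simpl; lia.
rewrite sum_lin.
have [h1 h2 h3 h4] := inner_basic (leqW hm : (m <= K)%N).
move: h1 h2 h3 h4.
set s1 := \sum_(w < K.+1) w; set s2 := \sum_(w < K.+1) w * w.
set s3 := \sum_(w < K.+1) (m < w); set s4 := \sum_(w < K.+1) (m < w) * w.
tonat; nia.
Qed.

Lemma recB2 n : let K := n.+1 in
  1 * SS n.+1 (fun _ b _ => b * b) + 2 * K * SS n (fun _ b m => b * m) + K * K * SS n (fun _ _ m => m) = K.+1 * SS n (fun _ b _ => b * b) + 2 * K * K * SS n (fun _ b _ => b) + K * K * K * SS n (fun _ _ _ => 1).
Proof.
move=> K; rewrite SS_rec /SS [LHS]sum_comb3 [RHS]sum_comb3; apply: eq_bigr => σ _.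
have hm := mstat_le σ; move: hm; move: (inv_perm σ) (maj_perm σ) (mstat σ) => a b m hm.
rewrite (eq_bigr (fun w : 'I_n.+2 => b * b + 0 * w + 0 * (w * w) + (2 * b * K + K * K) * (m < w) + 0 * ((m < w) * w))); last first.
  by move=> w _; case: (m < w); tonat; simpl; lia.
rewrite sum_lin.
have [h1 h2 h3 h4] := inner_basic (leqW hm : (m <= K)%N).
move: h1 h2 h3 h4.
set s1 := \sum_(w < K.+1) w; set s2 := \sum_(w < K.+1) w * w.
set s3 := \sum_(w < K.+1) (m < w); set s4 := \sum_(w < K.+1) (m < w) * w.
tonat; nia.
Qed.

Lemma recP n : let K := n.+1 in
  6 * SS n.+1 (fun a _ m => a * m) = 3 * K * K.+1 * SS n (fun a _ _ => a) + K * K.+1 * (2 * K + 1) * SS n (fun _ _ _ => 1).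
Proof.
move=> K; rewrite SS_rec /SS [LHS]sum_comb1 [RHS]sum_comb2; apply: eq_bigr => σ _.
have hm := mstat_le σ; move: hm; move: (inv_perm σ) (maj_perm σ) (mstat σ) => a b m hm.
rewrite (eq_bigr (fun w : 'I_n.+2 => 0 + a * w + 1 * (w * w) + 0 * (m < w) + 0 * ((m < w) * w))); last first.
  by move=> w _; case: (m < w); tonat; simpl; lia.
rewrite sum_lin.
have [h1 h2 h3 h4] := inner_basic (leqW hm : (m <= K)%N).
move: h1 h2 h3 h4.
set s1 := \sum_(w < K.+1) w; set s2 := \sum_(w < K.+1) w * w.
set s3 := \sum_(w < K.+1) (m < w); set s4 := \sum_(w < K.+1) (m < w) * w.
tonat; nia.
Qed.

Lemma recQ n : let K := n.+1 in
  2 * SS n.+1 (fun _ b m => b * m) + K * SS n (fun _ _ m => m * m) + K * SS n (fun _ _ m => m) = K * K.+1 * SS n (fun _ b _ => b) + K * K * K.+1 * SS n (fun _ _ _ => 1).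
Proof.
move=> K; rewrite SS_rec /SS [LHS]sum_comb3 [RHS]sum_comb2; apply: eq_bigr => σ _.
have hm := mstat_le σ; move: hm; move: (inv_perm σ) (maj_perm σ) (mstat σ) => a b m hm.
rewrite (eq_bigr (fun w : 'I_n.+2 => 0 + b * w + 0 * (w * w) + 0 * (m < w) + K * ((m < w) * w))); last first.
  by move=> w _; case: (m < w); tonat; simpl; lia.
rewrite sum_lin.
have [h1 h2 h3 h4] := inner_basic (leqW hm : (m <= K)%N).
move: h1 h2 h3 h4.
set s1 := \sum_(w < K.+1) w; set s2 := \sum_(w < K.+1) w * w.
set s3 := \sum_(w < K.+1) (m < w); set s4 := \sum_(w < K.+1) (m < w) * w.
tonat; nia.
Qed.

Lemma recM1 n : let K := n.+1 in
  2 * SS n.+1 (fun _ _ m => m) = K * K.+1 * SS n (fun _ _ _ => 1).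
Proof.
move=> K; rewrite SS_rec /SS [LHS]sum_comb1 [RHS]sum_comb1; apply: eq_bigr => σ _.
have hm := mstat_le σ; move: hm; move: (inv_perm σ) (maj_perm σ) (mstat σ) => a b m hm.
rewrite (eq_bigr (fun w : 'I_n.+2 => 0 + 1 * w + 0 * (w * w) + 0 * (m < w) + 0 * ((m < w) * w))); last first.
  by move=> w _; case: (m < w); tonat; simpl; lia.
rewrite sum_lin.
have [h1 h2 h3 h4] := inner_basic (leqW hm : (m <= K)%N).
move: h1 h2 h3 h4.
set s1 := \sum_(w < K.+1) w; set s2 := \sum_(w < K.+1) w * w.
set s3 := \sum_(w < K.+1) (m < w); set s4 := \sum_(w < K.+1) (m < w) * w.
tonat; nia.
Qed.

Lemma recM2 n : let K := n.+1 in
  6 * SS n.+1 (fun _ _ m => m * m) = K * K.+1 * (2 * K + 1) * SS n (fun _ _ _ => 1).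
Proof.
move=> K; rewrite SS_rec /SS [LHS]sum_comb1 [RHS]sum_comb1; apply: eq_bigr => σ _.
have hm := mstat_le σ; move: hm; move: (inv_perm σ) (maj_perm σ) (mstat σ) => a b m hm.
rewrite (eq_bigr (fun w : 'I_n.+2 => 0 + 0 * w + 1 * (w * w) + 0 * (m < w) + 0 * ((m < w) * w))); last first.
  by move=> w _; case: (m < w); tonat; simpl; lia.
rewrite sum_lin.
have [h1 h2 h3 h4] := inner_basic (leqW hm : (m <= K)%N).
move: h1 h2 h3 h4.
set s1 := \sum_(w < K.+1) w; set s2 := \sum_(w < K.+1) w * w.
set s3 := \sum_(w < K.+1) (m < w); set s4 := \sum_(w < K.+1) (m < w) * w.
tonat; nia.
Qed.

Lemma SS0 F : SS 0 F = F 0 0 0.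
Proof.
rewrite /SS (eq_bigr (fun _ => F 0 0 0)); last first.
  move=> s _; congr F.
  - by rewrite inv_permE /invS big_ord_recr big_ord0 /= big_ord_recr big_ord0.


  - by rewrite maj_permE /majS big_ord_recr big_ord0.
by rewrite sum_nat_const card_Sn mul1n.
Qed.

Definition closed n :=
  let N := SS n (fun _ _ _ => 1) in
  (144 * SS n (fun a _ _ => a) = N * (36 * n + 36 * n * n))
   /\ (144 * SS n (fun a _ _ => a * a) = N * (14 * n + 27 * n * n + 22 * n * n * n + 9 * n * n * n * n))
   /\ (144 * SS n (fun _ b _ => b) = N * (36 * n + 36 * n * n))
   /\ (144 * SS n (fun _ b _ => b * b) = N * (14 * n + 27 * n * n + 22 * n * n * n + 9 * n * n * n * n))
   /\ (144 * SS n (fun a b _ => a * b) = N * (18 * n + 27 * n * n + 18 * n * n * n + 9 * n * n * n * n))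
   /\ (144 * SS n (fun a _ m => a * m) = N * (24 * n + 30 * n * n + 18 * n * n * n))
   /\ (144 * SS n (fun _ b m => b * m) = N * (24 * n + 30 * n * n + 18 * n * n * n))
   /\ (144 * SS n (fun _ _ m => m) = N * (72 * n)) /\ (144 * SS n (fun _ _ m => m * m) = N * (24 * n + 48 * n * n)).

Lemma closedP n : closed n.
Proof.
elim: n => [|n IH].
  by rewrite /closed !SS0.
move: IH; rewrite /closed.
have := recN n; have := recA1 n; have := recA2 n; have := recB1 n; have := recB2 n;
have := recC n; have := recP n; have := recQ n; have := recM1 n; have := recM2 n.
rewrite /=.
set N := SS n (fun _ _ _ => 1); set A1 := SS n (fun a _ _ => a); set A2 := SS n (fun a _ _ => a * a).
set B1 := SS n (fun _ b _ => b); set B2 := SS n (fun _ b _ => b * b).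
set C := SS n (fun a b _ => a * b); set P := SS n (fun a _ m => a * m).
set Q := SS n (fun _ b m => b * m); set M1 := SS n (fun _ _ m => m).
set M2 := SS n (fun _ _ m => m * m).
set N' := SS n.+1 (fun _ _ _ => 1); set A1' := SS n.+1 (fun a _ _ => a); set A2' := SS n.+1 (fun a _ _ => a * a).
set B1' := SS n.+1 (fun _ b _ => b); set B2' := SS n.+1 (fun _ b _ => b * b).
set C' := SS n.+1 (fun a b _ => a * b); set P' := SS n.+1 (fun a _ m => a * m).
set Q' := SS n.+1 (fun _ b m => b * m); set M1' := SS n.+1 (fun _ _ m => m).
set M2' := SS n.+1 (fun _ _ m => m * m).
tonat => eM2 eM1 eQ eP eC eB2 eB1 eA2 eA1 eN [hA1 [hA2 [hB1 [hB2 [hC [hP [hQ [hM1 hM2]]]]]]]].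
have eN2 : N' = (n.+2 * N)%coq_nat by lia.
rewrite eN2; clear eN eN2.
clearbody N A1 A2 B1 B2 C P Q M1 M2 A1' A2' B1' B2' C' P' Q' M1' M2'.
Ltac mul h := let h1 := fresh "h" in let h2 := fresh "h" in
  have h1 := f_equal (fun x => (n * x)%coq_nat) h;
  have h2 := f_equal (fun x => (n * (n * x))%coq_nat) h; simpl in h1, h2.
split; [clear -eA1 hA1; mul hA1; lia|].
split; [clear -eA2 hA2 hA1; mul hA1; mul hA2; lia|].
split; [clear -eB1 hB1 hM1; mul hB1; mul hM1; lia|].
split; [clear -eB2 hB2 hQ hB1 hM1; mul hB2; mul hQ; mul hB1; mul hM1; lia|].
split; [clear -eC hC hP hM2 hM1 hA1 hB1; mul hC; mul hP; mul hM2; mul hM1; mul hA1; mul hB1; lia|].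
split; [clear -eP hA1; mul hA1; lia|].
split; [clear -eQ hM2 hM1 hB1; mul hM2; mul hM1; mul hB1; lia|].
split; [clear -eM1; lia|].
clear -eM2; lia.
Qed.

Local Open Scope ring_scope.

Lemma G1 (R : numFieldType) (Z X Y N T D : nat) : (0 < N)%N -> (0 < D)%N ->
  (D * (Z * N) = T * (N * N) + D * (X * Y))%N ->
  Z%:R / N%:R - X%:R / N%:R * (Y%:R / N%:R) = T%:R / D%:R :> R.
Proof.
move=> hN hD e.
have nN : N%:R != 0 :> R by rewrite pnatr_eq0 -lt0n.
have nD : D%:R != 0 :> R by rewrite pnatr_eq0 -lt0n.
rewrite mulf_div; apply/eqP; rewrite subr_eq addf_div ?mulf_neq0 //.
rewrite eqr_div ?mulf_neq0 // -!natrM -!natrD -natrM eqr_nat; apply/eqP.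
have := f_equal (muln N) e; tonat; lia.
Qed.

Lemma G2 (R : numFieldType) (a b c d e f : nat) : (0 < b)%N -> (0 < c)%N -> (0 < d)%N ->
  (0 < f)%N -> (a * d * f = e * (b * c))%N ->
  (a%:R / b%:R) / (c%:R / d%:R) = e%:R / f%:R :> R.
Proof.
move=> hb hc hd hf h.
have nb : b%:R != 0 :> R by rewrite pnatr_eq0 -lt0n.
have nc : c%:R != 0 :> R by rewrite pnatr_eq0 -lt0n.
have nd : d%:R != 0 :> R by rewrite pnatr_eq0 -lt0n.
have nf : f%:R != 0 :> R by rewrite pnatr_eq0 -lt0n.
rewrite invf_div mulf_div; apply/eqP; rewrite eqr_div ?mulf_neq0 //.
by rewrite -!natrM eqr_nat h.
Qed.

Lemma card_SS k : #|{perm 'I_k.+1}| = SS k (fun _ _ _ => 1).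
Proof. by rewrite /SS sum1_card. Qed.

Lemma SS_pos k : (0 < SS k (fun _ _ _ => 1))%N.
Proof. by rewrite -card_SS card_Sn fact_gt0. Qed.

Lemma Esum (R : fieldType) k (f : 'S_k.+1 -> nat) :
  Eperm (fun s => (f s)%:R : R) = (\sum_s f s)%:R / (SS k (fun _ _ _ => 1))%:R.
Proof. by rewrite /Eperm natr_sum card_SS. Qed.

Lemma Esum2 (R : fieldType) k (f g : 'S_k.+1 -> nat) :
  Eperm (fun s => (f s)%:R * (g s)%:R : R) =
  (\sum_s f s * g s)%:R / (SS k (fun _ _ _ => 1))%:R.
Proof.
rewrite /Eperm natr_sum card_SS; congr (_ / _); apply: eq_bigr => s _.
by rewrite natrM.
Qed.

Lemma Cov_eq (R : numFieldType) k :
  Covperm (@invR R k.+1) (@majR R k.+1) = (k.+1 * k)%:R / 8%:R.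
Proof.
rewrite /Covperm.
rewrite /invR /majR Esum2 !Esum.
apply: (@G1 R (SS k (fun a b _ => a * b)) (SS k (fun a _ _ => a)) (SS k (fun _ b _ => b)) (SS k (fun _ _ _ => 1)) _ _); [exact: SS_pos|by []|].
have [hA1 [_ [hB1 [_ [hC _]]]]] := closedP k.
move: hA1 hB1 hC.
set N := SS k (fun _ _ _ => 1); set A1 := SS k (fun a _ _ => a); set B1 := SS k (fun _ b _ => b);
set C := SS k (fun a b _ => a * b).
clearbody N A1 B1 C => hA1 hB1 hC.
have h1 := f_equal (muln N) hC.
have h2 : ((144 * A1) * (144 * B1) = (N * (36 * k + 36 * k * k)) * (N * (36 * k + 36 * k * k)))%N
  by rewrite hA1 hB1.
move: h1 h2; tonat; lia.
Qed.

Lemma VarA_eq (R : numFieldType) k :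
  Varperm (@invR R k.+1) = (k.+1 * k * (2 * k + 7))%:R / 72%:R.
Proof.
rewrite /Varperm /Covperm.
rewrite /invR Esum2 !Esum.
apply: (@G1 R (SS k (fun a _ _ => a * a)) (SS k (fun a _ _ => a)) (SS k (fun a _ _ => a)) (SS k (fun _ _ _ => 1)) _ _); [exact: SS_pos|by []|].
have [hA1 [hA2 _]] := closedP k.
move: hA1 hA2.
set N := SS k (fun _ _ _ => 1); set A1 := SS k (fun a _ _ => a); set A2 := SS k (fun a _ _ => a * a).
clearbody N A1 A2 => hA1 hA2.
have h1 := f_equal (muln N) hA2.
have h2 : ((144 * A1) * (144 * A1) = (N * (36 * k + 36 * k * k)) * (N * (36 * k + 36 * k * k)))%N
  by rewrite hA1.
move: h1 h2; tonat; lia.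
Qed.

Lemma VarB_eq (R : numFieldType) k :
  Varperm (@majR R k.+1) = (k.+1 * k * (2 * k + 7))%:R / 72%:R.
Proof.
rewrite /Varperm /Covperm.
rewrite /majR Esum2 !Esum.
apply: (@G1 R (SS k (fun _ b _ => b * b)) (SS k (fun _ b _ => b)) (SS k (fun _ b _ => b)) (SS k (fun _ _ _ => 1)) _ _); [exact: SS_pos|by []|].
have [_ [_ [hB1 [hB2 _]]]] := closedP k.
move: hB1 hB2.
set N := SS k (fun _ _ _ => 1); set B1 := SS k (fun _ b _ => b); set B2 := SS k (fun _ b _ => b * b).
clearbody N B1 B2 => hB1 hB2.
have h1 := f_equal (muln N) hB2.
have h2 : ((144 * B1) * (144 * B1) = (N * (36 * k + 36 * k * k)) * (N * (36 * k + 36 * k * k)))%N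
  by rewrite hB1.
move: h1 h2; tonat; lia.
Qed.

Lemma Corr_eq (R : rcfType) k : (0 < k)%N ->
  Corrperm (@invR R k.+1) (@majR R k.+1) = 9%:R / (2 * k.+1 + 5)%:R.
Proof.
move=> hk; rewrite /Corrperm Cov_eq VarA_eq VarB_eq -expr2 sqrtr_sqr ger0_norm; last first.
  by rewrite divr_ge0 ?ler0n.
apply: G2 => //; last by tonat; lia.
by rewrite !muln_gt0 hk addn_gt0 orbT.

Qed.

Unset Implicit Arguments.
Theorem mainTheorem4 (R : archiRcfType) :
  (forall n : nat, (1 <= n)%N ->
     Covperm (@invR R n) (@majR R n) = (n * (n - 1))%:R / 8%:R)
  /\ (forall n : nat, (2 <= n)%N ->
     Corrperm (@invR R n) (@majR R n)
       = 9%:R * (n - 1)%:R / (2 * n ^ 2 + 3 * n - 5)%:R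
     /\ Corrperm (@invR R n) (@majR R n) = 9%:R / (2 * n + 5)%:R)
  /\ (forall eps : R, 0 < eps -> exists N : nat, forall n : nat, (N <= n)%N ->
     `|Corrperm (@invR R n) (@majR R n)| < eps).
Proof.
have P2 : forall n : nat, (2 <= n)%N ->
     Corrperm (@invR R n) (@majR R n)
       = 9%:R * (n - 1)%:R / (2 * n ^ 2 + 3 * n - 5)%:R
     /\ Corrperm (@invR R n) (@majR R n) = 9%:R / (2 * n + 5)%:R.
  case=> [|k] // hk; rewrite Corr_eq //; split => //.
  rewrite -natrM; apply/eqP; rewrite eqr_div ?pnatr_eq0 -?lt0n //; last first.
    by rewrite expnS expn1; move: hk; rewrite -?minusE; tonat; move/ssrnat.ltP => hk; apply/ssrnat.ltP; lia.
  rewrite -!natrM eqr_nat; apply/eqP.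
  rewrite expnS expn1; move: hk; rewrite -?minusE; tonat; lia.
split; last split => //.
  by case=> [|k] // _; rewrite Cov_eq subn1.
move=> eps heps.
have hb := archi_boundP (divr_ge0 (ler0n R 9) (ltW heps)).
exists (maxn 2 (Num.Def.archi_bound (9%:R / eps))) => n.
rewrite geq_max => /andP [h2 hB].
have [_ ->] := P2 n h2.
rewrite ger0_norm ?divr_ge0 ?ler0n // ltr_pdivrMr ?ltr0n ?addn_gt0 ?orbT //.
rewrite mulrC -ltr_pdivrMr //.
apply: (lt_le_trans hb); rewrite ler_nat.
apply: (leq_trans hB); move: h2; tonat; move/ssrnat.leP => h2; apply/ssrnat.leP; lia.
Qed.
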